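(* Let $\beta\in[0,1)$ and let $U:\mathbb{R}^d\to\mathbb{R}$ be twice continuously differentiable with $\nabla U(0)=0$ and $\sup_x\|\mathrm{D}^2U(x)\|\le\mathtt{L}$. Assume there exist $\mathtt{m}_\beta>0$, $\mathtt{L}_\beta,\mathtt{K}_\beta\ge0$ with $\frac{\mathtt{L}_\beta}{1+\|x\|^{3\beta/4}}\ge\mathrm{D}^2U(x)[y,y]\ge\frac{\mathtt{m}_\beta}{1+\|x\|^\beta}$ for all $\|x\|\ge\mathtt{K}_\beta$, $\|y\|=1$. Let $\bar\gamma\le(4\mathtt{L})^{-1}\wedge(\mathtt{m}_\beta^3/(2^4\mathtt{L}_\beta^4))$, $\epsilon=(\mathtt{m}_\beta^3/2^4)\{2^{3/2}\mathtt{L}_\beta^2+2^{-1/2}\bar\gamma^{1/2}\mathtt{L}_\beta^3\}^{-1}$ and $$C_{2,\bar\gamma,\beta}=2\mathtt{L}+2^{3/2}\mathtt{L}_\beta^2\epsilon^{-1}+(\bar\gamma/2)\mathtt{L}^2+2^{-1/2}\bar\gamma^{3/2}\mathtt{L}_\beta^3\epsilon^{-1}.$$ Let $\tilde{\mathtt{K}}_\beta=[4\mathtt{K}_\beta(1+\mathtt{L}/\mathtt{m}_\beta)]\vee[4\mathtt{K}_\beta(1+\mathtt{L}/\mathtt{m}_\beta)]^{1/(1-\beta)}$ and $\bar{\mathtt{K}}_\beta=[2\mathtt{L}\mathtt{K}_\beta/\mathtt{L}_\beta]\vee[2\mathtt{L}\mathtt{K}_\beta/\mathtt{L}_\beta]^{1/(1-3\beta/4)}$.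 Then for all $\gamma\in(0,\bar\gamma]$ and $x,z\in\mathbb{R}^d$ with $\|x\|\ge\max(2\mathtt{K}_\beta,\tilde{\mathtt{K}}_\beta,\bar{\mathtt{K}}_\beta)$ and $\|z\|\le\|x\|/(4\sqrt{2\gamma})$, $$\tau_\gamma(x,z)\le C_{2,\bar\gamma,\beta}\gamma\|z\|^2.$$
   Context: For $\gamma>0$ and $x,z\in\mathbb{R}^d$, $\tau_\gamma(x,z)=U(x-\gamma\nabla U(x)+\sqrt{2\gamma}z)-U(x)+\frac12\big\{\|z-(\gamma/2)^{1/2}[\nabla U(x)+\nabla U(x-\gamma\nabla U(x)+\sqrt{2\gamma}z)]\|^2-\|z\|^2\big\}$. *)

(* Defs.v *)
From HB Require Import structures.
From mathcomp Require Import all_boot all_order all_algebra.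
From mathcomp Require Import all_classical all_reals all_analysis.
Set Implicit Arguments. Unset Strict Implicit. Unset Printing Implicit Defensive.
Import Order.TTheory GRing.Theory Num.Theory.
Import numFieldNormedType.Exports.
Local Open Scope ring_scope.

Section Defs.
Variables (R : realType) (d : nat).

(* Euclidean norm on R^d (the library norm on matrices is the sup norm). *)
Definition enorm (x : 'rV[R]_d) : R := Num.sqrt (\sum_(i < d) (x 0 i) ^+ 2).

Definition evec (i : 'I_d) : 'rV[R]_d := delta_mx 0 i.

Definition grad (U : 'rV[R]_d -> R) (x : 'rV[R]_d) : 'rV[R]_d :=
  \row_i derive U x (evec i).

Definition hess (U : 'rV[R]_d -> R) (x : 'rV[R]_d) : 'M[R]_d :=
  \matrix_(i, j) derive (fun y => derive U y (evec i)) x (evec j).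

Definition hessf (U : 'rV[R]_d -> R) (x y v : 'rV[R]_d) : R :=
  \sum_(i < d) \sum_(j < d) y 0 i * hess U x i j * v 0 j.

Definition C2 (U : 'rV[R]_d -> R) : Prop :=
  (forall x, differentiable U x) /\
  (forall x, differentiable (grad U) x) /\
  continuous (hess U).

Definition tau (U : 'rV[R]_d -> R) (gamma : R) (x z : 'rV[R]_d) : R :=
  let y := x - gamma *: grad U x + Num.sqrt (2 * gamma) *: z in
  U y - U x +
  2^-1 * (enorm (z - Num.sqrt (gamma / 2) *: (grad U x + grad U y)) ^+ 2
          - enorm z ^+ 2).

End Defs.

(* Main.v *)
Require Import Defs.
From HB Require Import structures.
From mathcomp Require Import all_boot all_order all_algebra.
From mathcomp Require Import all_classical all_reals all_analysis.
From mathcomp Require Import ring lra.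
Set Implicit Arguments. Unset Strict Implicit. Unset Printing Implicit Defensive.
Import Order.TTheory GRing.Theory Num.Theory.
Import numFieldNormedType.Exports.
Local Open Scope classical_set_scope.
Local Open Scope ring_scope.

Section Vec.
Variables (R : realType) (d : nat).
Implicit Types (a b c : 'rV[R]_d).

Definition dot a b : R := \sum_(i < d) a 0 i * b 0 i.

Lemma dotC a b : dot a b = dot b a.
Proof. by apply: eq_bigr => i _; rewrite mulrC. Qed.

Lemma dotDl a b c : dot (a + b) c = dot a c + dot b c.
Proof. by rewrite /dot -big_split; apply: eq_bigr => i _; rewrite !mxE mulrDl. Qed.

Lemma dotDr a b c : dot c (a + b) = dot c a + dot c b.
Proof. by rewrite dotC dotDl !(dotC c). Qed.

Lemma dotZl k a b : dot (k *: a) b = k * dot a b.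
Proof. by rewrite /dot mulr_sumr; apply: eq_bigr => i _; rewrite !mxE mulrA. Qed.

Lemma dotZr k a b : dot a (k *: b) = k * dot a b.
Proof. by rewrite dotC dotZl dotC. Qed.

Lemma dotNl a b : dot (- a) b = - dot a b.
Proof. by rewrite -scaleN1r dotZl mulN1r. Qed.

Lemma dotNr a b : dot a (- b) = - dot a b.
Proof. by rewrite dotC dotNl dotC. Qed.

Lemma dotBl a b c : dot (a - b) c = dot a c - dot b c.
Proof. by rewrite dotDl dotNl. Qed.

Lemma dotBr a b c : dot c (a - b) = dot c a - dot c b.
Proof. by rewrite dotDr dotNr. Qed.

Lemma dot0l a : dot 0 a = 0.
Proof. by rewrite /dot big1 // => i _; rewrite mxE mul0r. Qed.

Lemma dot0r a : dot a 0 = 0.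
Proof. by rewrite dotC dot0l. Qed.

Lemma dotxx_ge0 a : 0 <= dot a a.
Proof. by apply: sumr_ge0 => i _; rewrite -expr2 sqr_ge0. Qed.

Lemma enorm_ge0 a : 0 <= enorm a.
Proof. exact: sqrtr_ge0. Qed.

Lemma enorm_sq a : enorm a ^+ 2 = dot a a.
Proof.
rewrite /enorm sqr_sqrtr; last by apply: sumr_ge0 => i _; rewrite sqr_ge0.
by apply: eq_bigr => i _; rewrite expr2.
Qed.

Lemma enorm0 : enorm (0 : 'rV[R]_d) = 0.
Proof.
by rewrite /enorm big1 ?sqrtr0 // => i _; rewrite mxE expr0n.
Qed.

Lemma quad_disc (A B C : R) : 0 <= C ->
  (forall t, 0 <= A + 2 * t * B + t ^+ 2 * C) -> B ^+ 2 <= A * C.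
Proof.
move=> C0 H; have [Cz|Cp] := eqVneq C 0.
  have [Bz|Bn] := eqVneq B 0; first by rewrite Bz Cz expr0n mulr0.
  have := H (- (A + 1) / (2 * B)); rewrite Cz mulr0 addr0.
  have -> : 2 * (- (A + 1) / (2 * B)) * B = - (A + 1).
    by field; rewrite Bn.
  lra.
have Cpos : 0 < C by rewrite lt_neqAle eq_sym Cp C0.
have := H (- B / C).
have -> : A + 2 * (- B / C) * B + (- B / C) ^+ 2 * C = A - B ^+ 2 / C.
  by field; rewrite Cp.
rewrite subr_ge0 ler_pdivrMr // mulrC => h; by [].
Qed.

Lemma sq_le (x y : R) : 0 <= y -> x ^+ 2 <= y ^+ 2 -> x <= y.
Proof. move=> y0 h; rewrite leNgt; apply/negP => hx; nra. Qed.

Lemma CS a b : dot a b <= enorm a * enorm b.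
Proof.
have h : dot a b ^+ 2 <= dot a a * dot b b.
  apply: quad_disc; first exact: dotxx_ge0.
  move=> t; have := dotxx_ge0 (a + t *: b).
  rewrite dotDl !dotDr !dotZl !dotZr (dotC b a).
  have -> : dot a a + t * dot a b + (t * dot a b + t * (t * dot b b))
     = dot a a + 2 * t * dot a b + t ^+ 2 * dot b b by ring.
  by [].
apply: sq_le; first by rewrite mulr_ge0 // enorm_ge0.
by rewrite exprMn !enorm_sq.
Qed.

Lemma CSabs a b : `|dot a b| <= enorm a * enorm b.
Proof.
have [h|h] := lerP 0 (dot a b); first by rewrite ger0_norm // CS.
by rewrite ltr0_norm // -dotNl; apply: le_trans (CS _ _) _; rewrite le_eqVlt; apply/orP; left; apply/eqP; congr (_ * _); rewrite /enorm; congr Num.sqrt; apply: eq_bigr => i _; rewrite mxE sqrrN.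
Qed.

Lemma enormZ k a : enorm (k *: a) = `|k| * enorm a.
Proof.
apply/eqP; rewrite -(@eqrXn2 _ 2) //; last by rewrite mulr_ge0 // enorm_ge0.
  by rewrite exprMn !enorm_sq dotZl dotZr mulrA -expr2 real_normK ?num_real.
exact: enorm_ge0.
Qed.

Lemma enormN a : enorm (- a) = enorm a.
Proof. by rewrite -scaleN1r enormZ normrN normr1 mul1r. Qed.

Lemma enormD a b : enorm (a + b) <= enorm a + enorm b.
Proof.
apply: sq_le; first by rewrite addr_ge0 // enorm_ge0.
rewrite enorm_sq dotDl !dotDr sqrrD !enorm_sq (dotC b a).
have := CS a b; nra.
Qed.

Lemma enormB a b : enorm (a - b) <= enorm a + enorm b.
Proof. by rewrite -(enormN b); apply: enormD. Qed.

Lemma enorm_rev a b : enorm a - enorm b <= enorm (a + b).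
Proof.
have := enormD (a + b) (- b); rewrite addrK enormN; lra.
Qed.

End Vec.

Section Calc.
Variables (R : realType) (V : normedModType R).

Lemma coord_derive n (F : V -> 'rV[R]_n) a v i : derivable F a v ->
  derivable (fun y => F y 0 i) a v /\ derive (fun y => F y 0 i) a v = derive F a v 0 i.
Proof.
move=> dF.
have H : (fun h : R => h^-1 *: (((fun y => F y 0 i) \o shift a) (h *: v) - F a 0 i))
   @ 0^' --> derive F a v 0 i.
  have -> : (fun h : R => h^-1 *: (((fun y => F y 0 i) \o shift a) (h *: v) - F a 0 i))
     = (fun M : 'rV[R]_n => M 0 i) \o
       (fun h : R => h^-1 *: ((F \o shift a) (h *: v) - F a)).
    by apply: funext => h /=; rewrite !mxE.
  apply: continuous_cvg; first exact: coord_continuous.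
  exact: dF.
split; first by apply/cvg_ex; eexists; exact: H.
exact: cvg_lim H.
Qed.

Lemma dot_derive n (F : V -> 'rV[R]_n) a v w : derivable F a v ->
  derivable (fun y => dot (F y) w) a v /\
  derive (fun y => dot (F y) w) a v = dot (derive F a v) w.
Proof.
move=> dF.
have E : (fun y => dot (F y) w) = \sum_(i < n) (w 0 i *: (fun y => F y 0 i)).
  apply: funext => y; rewrite fct_sumE /dot; apply: eq_bigr => i _.
  by rewrite /= mulrC.
have D : is_derive a v (\sum_(i < n) (w 0 i *: (fun y => F y 0 i)))
   (\sum_(i < n) w 0 i *: derive F a v 0 i).
  apply: is_derive_sum => i; apply: is_deriveZ.
  have [h1 h2] := coord_derive i dF.
  by apply: DeriveDef.
rewrite E; split; first exact: ex_derive.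
rewrite derive_val /dot; apply: eq_bigr => i _; by rewrite mulrC.
Qed.

Lemma shift_derive (W : normedModType R) (F : V -> W) (a v : V) (t : R) :
  (derivable (fun s : R => F (a + s *: v)) t 1 <-> derivable F (a + t *: v) v) /\
  derive (fun s : R => F (a + s *: v)) t 1 = derive F (a + t *: v) v.
Proof.
have E : (fun h : R => h^-1 *: (((fun s : R => F (a + s *: v)) \o shift t) (h *: 1)
             - F (a + t *: v)))
       = (fun h : R => h^-1 *: ((F \o shift (a + t *: v)) (h *: v) - F (a + t *: v))).
  apply: funext => h /=; congr (_ *: (F _ - _)).
  rewrite -[X in (X + t) *: v]/(h * 1) mulr1 scalerDl. by rewrite addrCA addrA.
by rewrite /derivable /derive E.
Qed.

End Calc.

Section USec.
Variables (R : realType) (d : nat) (U : 'rV[R]_d -> R).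

Definition Hv (q v : 'rV[R]_d) : 'rV[R]_d := \row_i \sum_(j < d) hess U q i j * v 0 j.

Lemma deriv_dotE q v : differentiable U q -> derive U q v = dot (grad U q) v.
Proof.
move=> dU; rewrite deriveE // {1}(row_sum_delta v) linear_sum /dot.
apply: eq_bigr => j _; rewrite linearZ /= -deriveE // mxE /evec.
by rewrite /GRing.scale /= mulrC.
Qed.

Lemma deriv_gradE q v : differentiable (grad U) q -> derive (grad U) q v = Hv q v.
Proof.
move=> dG; apply/rowP => i.
rewrite deriveE // {1}(row_sum_delta v) linear_sum summxE mxE.
apply: eq_bigr => j _; rewrite linearZ mxE -deriveE //.
have [_ h] := @coord_derive R _ d (grad U) q (@evec R d j) i
   (@diff_derivable _ _ _ (grad U) q (@evec R d j) dG).
rewrite -h /hess mxE mulrC.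
have -> : (fun y : 'rV[R]_d => grad U y 0 i) = (fun y => derive U y (@evec R d i)).
  by apply: funext => y; rewrite mxE.
by [].
Qed.

Lemma Hv_mx q v : v *m (hess U q)^T = Hv q v.
Proof.
apply/rowP => i; rewrite !mxE; apply: eq_bigr => j _; rewrite !mxE mulrC.
by [].
Qed.

Lemma hessfE q y v : hessf U q y v = dot y (Hv q v).
Proof.
rewrite /hessf /dot; apply: eq_bigr => i _; rewrite mxE mulr_sumr.
by apply: eq_bigr => j _; rewrite mulrA.
Qed.

End USec.

Lemma poly2_derive (R : realType) (a b t : R) :
  is_derive t 1 (fun s : R => a * s + b * s ^+ 2) (a + b * (2 * t)).
Proof.
have H : is_derive t (1:R) (a \*: (id : R^o -> R^o) + b \*: ((id : R^o -> R^o) ^+ 2))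
   (a *: (1:R) + b *: ((2%:R * t ^+ 1) *: (1:R))).
  exact: is_deriveD.
have -> : (fun s : R => a * s + b * s ^+ 2) = (a \*: (id : R^o -> R^o) + b \*: ((id : R^o -> R^o) ^+ 2)).
  by apply: funext => s /=; rewrite /GRing.scale /= expr2 /=.
apply: (is_derive_eq H).
rewrite /GRing.scale /= expr1 mulr1 mulr1. ring.
Qed.

Lemma mvt_gen (R : realType) (f df : R -> R) (a b : R) : a <= b ->
  (forall x : R, is_derive x (1 : R) f (df x)) ->
  exists2 c, a <= c <= b & f b - f a = df c * (b - a).
Proof.
move=> ab H.
have [c cI E] := @MVT_segment R f df a b ab (fun x _ => H x)
  (derivable_within_continuous (i := `[a, b]) (fun x _ => @ex_derive _ _ _ _ _ _ _ (H x))).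
by exists c => //; move: cI; rewrite in_itv.
Qed.

Section S.
Variables (R : realType) (d : nat) (U : 'rV[R]_d -> R).
Lemma phi_deriv (p dl : 'rV[R]_d) (t : R) : (forall q, differentiable U q) ->
  derivable (fun s : R => U (p + s *: dl)) t 1 /\
  derive (fun s : R => U (p + s *: dl)) t 1 = dot (grad U (p + t *: dl)) dl.
Proof.
move=> dU.
have [[_ h1] h2] := @shift_derive R _ R U p dl t.
split; first by apply: h1; apply: diff_derivable.
rewrite h2.
exact: deriv_dotE.
Qed.
Lemma psi_deriv (p dl w : 'rV[R]_d) (t : R) : (forall q, differentiable (grad U) q) ->
  derivable (fun s : R => dot (grad U (p + s *: dl)) w) t 1 /\
  derive (fun s : R => dot (grad U (p + s *: dl)) w) t 1 = dot (Hv U (p + t *: dl) dl) w.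
Proof.
move=> dG; have [[_ h1] h2] := @shift_derive R _ _ (grad U) p dl t.
have dF : derivable (fun s : R => grad U (p + s *: dl)) t 1.
  by apply: h1; apply: diff_derivable.
have [k1 k2] := @dot_derive R R^o d (fun s : R => grad U (p + s *: dl)) t 1 w dF.
split; first exact: k1.
rewrite k2.
have E : derive (fun s : R => grad U (p + s *: dl)) t 1 = Hv U (p + t *: dl) dl.
  rewrite -deriv_gradE //; exact: h2.
by rewrite E.
Qed.

Lemma grad_mvt (p dl w : 'rV[R]_d) : (forall q, differentiable (grad U) q) ->
  exists2 c, 0 <= c <= 1 &
    dot (grad U (p + dl)) w - dot (grad U p) w = dot (Hv U (p + c *: dl) dl) w.
Proof.
move=> dG.
have H : forall x : R, is_derive x (1:R) (fun s : R => dot (grad U (p + s *: dl)) w)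
           (dot (Hv U (p + x *: dl) dl) w).
  by move=> x; have [h1 h2] := psi_deriv p dl w x dG; apply: DeriveDef.
have [c c01 E] := mvt_gen ler01 H.
exists c => //; move: E; rewrite scale1r scale0r addr0 subr0 mulr1 => ->.
by [].
Qed.

Lemma bregman (p dl : 'rV[R]_d) (c0 : R) :
  (forall q, differentiable U q) -> (forall q, differentiable (grad U) q) ->
  (forall t, 0 <= t <= 1 -> c0 <= hessf U (p + t *: dl) dl dl) ->
  c0 / 2 <= U p - U (p + dl) + dot (grad U (p + dl)) dl.
Proof.
move=> dU dG hc.
set g1 := dot (grad U (p + dl)) dl.
pose h := (fun s : R => U (p + s *: dl)) + (fun s : R => (c0 - g1) * s + (- c0 / 2) * s ^+ 2).
pose dh := fun s : R => dot (grad U (p + s *: dl)) dl + ((c0 - g1) + (- c0 / 2) * (2 * s)).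
have H : forall x : R, is_derive x (1:R) h (dh x).
  move=> x; apply: is_deriveD; last exact: poly2_derive.
  by have [h1 h2] := phi_deriv p dl x dU; apply: DeriveDef.
have Hg : forall x : R, is_derive x (1:R) (fun s : R => dot (grad U (p + s *: dl)) dl)
           (dot (Hv U (p + x *: dl) dl) dl).
  by move=> x; have [h1 h2] := psi_deriv p dl dl x dG; apply: DeriveDef.
have [c /andP[c0' c1] E] := mvt_gen ler01 H.
have [c' /andP[c'0 c'1] E'] := mvt_gen c1 Hg.
have hc' := hc c' (introT andP (conj (le_trans c0' c'0) c'1)).
rewrite hessfE dotC in hc'.
move: E'; rewrite scale1r -/g1 => E'.
have dhle : dh c <= 0.
  rewrite /dh.
  have : c0 * (1 - c) <= g1 - dot (grad U (p + c *: dl)) dl.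
    by rewrite E'; apply: ler_wpM2r => //; rewrite subr_ge0.
  lra.
have hE : forall s, h s = U (p + s *: dl) + ((c0 - g1) * s + (- c0 / 2) * s ^+ 2) by [].
move: E; rewrite !hE scale1r scale0r addr0 expr1n expr0n subr0 !mulr1 !mulr0 => E.
have : dh c <= 0 := dhle.
rewrite -/g1 in E.
lra.
Qed.
End S.

Section Sym.
Variables (R : realType) (d : nat) (U : 'rV[R]_d -> R).
Hypothesis hC2 : C2 U.

Let e (i : 'I_d) : 'rV[R]_d := @evec R d i.
Let Di (i : 'I_d) := fun y : 'rV[R]_d => derive U y (e i).

Lemma U_line_derive (a v : 'rV[R]_d) (t : R) :
  is_derive t (1:R) (fun s : R => U (a + s *: v)) (derive U (a + t *: v) v).
Proof.
have [[_ h1] h2] := @shift_derive R _ R U a v t.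
apply: DeriveDef; last exact: h2.
by apply: h1; apply: diff_derivable; case: hC2.
Qed.

Lemma Di_line_derive (i : 'I_d) (a v : 'rV[R]_d) (t : R) :
  is_derive t (1:R) (fun s : R => Di i (a + s *: v))
     (derive (Di i) (a + t *: v) v).
Proof.
have [[_ h1] h2] := @shift_derive R _ R (Di i) a v t.
apply: DeriveDef; last exact: h2.
apply: h1.
have -> : Di i = (fun y => grad U y 0 i) by apply: funext => y; rewrite mxE.
have [k1 _] := @coord_derive R _ d (grad U) (a + t *: v) v i
   (@diff_derivable _ _ _ (grad U) (a + t *: v) v (proj1 (proj2 hC2) _)).
exact: k1.
Qed.

Lemma hessDi (i j : 'I_d) (y : 'rV[R]_d) : derive (Di i) y (e j) = hess U y i j.
Proof. by rewrite /hess mxE. Qed.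

Lemma delta_repr (q : 'rV[R]_d) (i j : 'I_d) (h : R) : 0 <= h ->
  exists xi eta, [/\ 0 <= xi <= h, 0 <= eta <= h &
   U (q + h *: e i + h *: e j) - U (q + h *: e i) - U (q + h *: e j) + U q
     = h ^+ 2 * hess U (q + xi *: e i + eta *: e j) i j].
Proof.
move=> h0.
pose g := (fun s : R => U ((q + h *: e j) + s *: e i)) - (fun s : R => U (q + s *: e i)).
pose dg := fun s : R => derive U ((q + h *: e j) + s *: e i) (e i) - derive U (q + s *: e i) (e i).
have Hg : forall x : R, is_derive x (1:R) g (dg x).
  by move=> x; apply: is_deriveB; apply: U_line_derive.
have [xi /andP[xi0 xih] E1] := mvt_gen h0 Hg.
pose k := fun s : R => Di i ((q + xi *: e i) + s *: e j).
have Hk : forall x : R, is_derive x (1:R) k (hess U ((q + xi *: e i) + x *: e j) i j).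
  move=> x; rewrite -hessDi; exact: Di_line_derive.
have [eta /andP[eta0 etah] E2] := mvt_gen h0 Hk.
exists xi, eta; split; try by apply/andP.
have gE : forall s, g s = U ((q + h *: e j) + s *: e i) - U (q + s *: e i) by [].
move: E1; rewrite !gE !scale0r !addr0 subr0 /dg.
have -> : q + h *: e j + xi *: e i = (q + xi *: e i) + h *: e j by rewrite addrAC.
have -> : derive U (q + xi *: e i + h *: e j) (e i) = k h by [].
have -> : derive U (q + xi *: e i) (e i) = k 0 by rewrite /k scale0r addr0.
rewrite E2 subr0 => E1.
have -> : q + h *: e i + h *: e j = q + h *: e j + h *: e i by rewrite addrAC.
have E3 : U (q + h *: e j + h *: e i) - U (q + h *: e i) - (U (q + h *: e j) - U q)
   = hess U (q + xi *: e i + eta *: e j) i j * h * h by rewrite -E1.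
transitivity (U (q + h *: e j + h *: e i) - U (q + h *: e i) - (U (q + h *: e j) - U q)).
  by ring.
by rewrite E3; ring.
Qed.


Lemma hess_cont (i j : 'I_d) (q : 'rV[R]_d) :
  (fun y => hess U y i j) @ q --> hess U q i j.
Proof.
have h1 : {for q, continuous (hess U)} by case: hC2 => _ [_ c]; exact: c.
have h2 : {for hess U q, continuous (fun M : 'M[R]_d => M i j)} by exact: coord_continuous.
exact: (continuous_comp h1 h2).
Qed.

Lemma near_ball (i j : 'I_d) (q : 'rV[R]_d) (eps : R) : 0 < eps ->
  exists2 r, 0 < r & forall y, `|q - y| < r -> `|hess U q i j - hess U y i j| < eps.
Proof.
move=> e0; have := @hess_cont i j q.
move=> /cvgrPdist_lt /(_ eps e0) /nbhs_ballP [r r0 B].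
exists r => // y qy; apply: B; rewrite -ball_normE /=; exact: qy.
Qed.

Lemma sym_aux (a b b' c eps : R) : b = b' -> `|a - b| < eps / 2 ->
  `|c - b'| < eps / 2 -> `|a - c| < eps.
Proof.
move=> -> h1 h2.
have -> : a - c = (a - b') + (b' - c) by ring.
apply: (le_lt_trans (ler_normD _ _)); rewrite (distrC b'); lra.
Qed.

Lemma hess_sym (q : 'rV[R]_d) (i j : 'I_d) : hess U q i j = hess U q j i.
Proof.
suff : forall eps, 0 < eps -> `|hess U q i j - hess U q j i| < eps.
  move=> H; apply/eqP; rewrite -subr_eq0 -normr_le0 leNgt; apply/negP => hp.
  by have := H _ hp; rewrite ltxx.
move=> eps e0.
have e2 : 0 < eps / 2 by rewrite divr_gt0.
have [r1 r1p B1] := near_ball i j q e2.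
have [r2 r2p B2] := near_ball j i q e2.
set r := Num.min r1 r2.
have rp : 0 < r by rewrite lt_min r1p r2p.
have rr1 : r <= r1 by rewrite /r ge_min lexx.
have rr2 : r <= r2 by rewrite /r ge_min lexx orbT.
set K := `|e i| + `|e j| + 1.
have Kp : 0 < K by rewrite /K ltr_wpDl // addr_ge0.
set h := r / (2 * K).
have hp : 0 < h by rewrite /h divr_gt0 // mulr_gt0.
have close : forall (a b : 'rV[R]_d) xi eta, `|a| + `|b| = `|e i| + `|e j| ->
    0 <= xi <= h -> 0 <= eta <= h ->
    `|q - (q + xi *: a + eta *: b)| < r.
  move=> a b xi eta hab /andP[x0 xh] /andP[y0 yh].
  rewrite -addrA opprD addNKr normrN.
  apply: (le_lt_trans (ler_normD _ _)); rewrite !normrZ !ger0_norm //.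
  have : xi * `|a| + eta * `|b| <= h * (`|a| + `|b|).
    rewrite mulrDr; apply: lerD; apply: ler_wpM2r => //.
  move/le_lt_trans; apply; rewrite hab.
  have : h * K = r / 2 by rewrite /h; field; rewrite gt_eqF.
  rewrite /K => hK.
  have : 0 <= h by exact: ltW.
  lra.
have [xi [eta [Hxi Heta E1]]] := delta_repr q i j (ltW hp).
have [xi' [eta' [Hxi' Heta' E2]]] := delta_repr q j i (ltW hp).
have E : hess U (q + xi *: e i + eta *: e j) i j = hess U (q + xi' *: e j + eta' *: e i) j i.
  have h2 : h ^+ 2 != 0 by rewrite expf_neq0 // gt_eqF.
  apply: (mulfI h2); rewrite -E1 -E2.
  rewrite [q + h *: e j + h *: e i]addrAC.
  set A := U _; set B := U _; set C := U _; set D := U q.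
  ring.
have b1 := B1 _ (lt_le_trans (close _ _ _ _ erefl Hxi Heta) rr1).
have b2 := B2 _ (lt_le_trans (close _ _ _ _ (addrC _ _) Hxi' Heta') rr2).
exact: (sym_aux E b1 b2).
Qed.
End Sym.

Section Quad.
Variables (R : realType) (d : nat) (U : 'rV[R]_d -> R).
Hypothesis hC2 : C2 U.

Lemma HvD (q a b : 'rV[R]_d) : Hv U q (a + b) = Hv U q a + Hv U q b.
Proof.
apply/rowP => i; rewrite !mxE -big_split /=; apply: eq_bigr => j _.
by rewrite ?mxE; ring.
Qed.

Lemma HvZ (q a : 'rV[R]_d) (t : R) : Hv U q (t *: a) = t *: Hv U q a.
Proof.
apply/rowP => i; rewrite !mxE mulr_sumr; apply: eq_bigr => j _.
by rewrite ?mxE; ring.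
Qed.

Lemma Hv_symdot (q a b : 'rV[R]_d) : dot a (Hv U q b) = dot b (Hv U q a).
Proof.
rewrite /dot.
under eq_bigr do rewrite mxE mulr_sumr.
under [RHS]eq_bigr do rewrite mxE mulr_sumr.
rewrite exchange_big /=; apply: eq_bigr => j _; apply: eq_bigr => i _.
by rewrite (hess_sym hC2 q i j); ring.
Qed.

Lemma Hv_bound (q : 'rV[R]_d) (Lam : R) : 0 <= Lam ->
  (forall v, 0 <= dot v (Hv U q v)) ->
  (forall v, dot v (Hv U q v) <= Lam * enorm v ^+ 2) ->
  forall v, enorm (Hv U q v) <= Lam * enorm v.
Proof.
move=> L0 pos up v.
set w := Hv U q v.
have CSQ : dot w (Hv U q v) ^+ 2 <= dot w (Hv U q w) * dot v (Hv U q v).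
  apply: quad_disc; first exact: pos.
  move=> t; have := pos (w + t *: v).
  rewrite HvD HvZ dotDl !dotDr !dotZl !dotZr (Hv_symdot q v w).
  set A := dot w (Hv U q w); set B := dot w (Hv U q v); set C := dot v (Hv U q v).
  have -> : A + t * B + (t * B + t * (t * C)) = A + 2 * t * B + t ^+ 2 * C by ring.
  by [].
have ww : dot w (Hv U q v) = enorm w ^+ 2 by rewrite enorm_sq.
rewrite ww in CSQ.
have h1 := up w; have h2 := up v.
have h3 := pos w; have h4 := pos v.
have nw := enorm_ge0 w; have nv := enorm_ge0 v.
apply: sq_le; first by rewrite mulr_ge0.
have [wz|wp] := eqVneq (enorm w) 0.
  by rewrite wz expr0n /= exprn_ge0 // mulr_ge0.
have wpos : 0 < enorm w ^+ 2 by rewrite exprn_gt0 // lt_neqAle eq_sym wp nw.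
have : enorm w ^+ 2 * enorm w ^+ 2 <= enorm w ^+ 2 * (Lam * enorm v) ^+ 2.
  apply: le_trans; first by rewrite -expr2; exact: CSQ.
  have : dot w (Hv U q w) * dot v (Hv U q v) <= (Lam * enorm w ^+ 2) * (Lam * enorm v ^+ 2).
    by apply: ler_pM.
  move/le_trans; apply; rewrite le_eqVlt; apply/orP; left; apply/eqP; ring.
by rewrite ler_pM2l.
Qed.

End Quad.

Section Pow.
Variable R : realType.

Lemma poly_ineq (A : R) : 0 <= A -> (1 + A ^+ 4) ^+ 3 <= 2 * (1 + A ^+ 3) ^+ 4.
Proof.
move=> A0.
have h1 : A ^+ 4 <= A ^+ 3 + A ^+ 6.
  have : 0 <= A ^+ 3 * (1 - A + A ^+ 3).
    apply: mulr_ge0; first exact: exprn_ge0.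
    have [hA|hA] := lerP A 1.
      have : 0 <= A ^+ 3 by exact: exprn_ge0.
      lra.
    have : A <= A ^+ 3.
      rewrite -{1}(expr1 A); apply: ler_eXn2l => //; exact: ltW.
    lra.
  have -> : A ^+ 3 * (1 - A + A ^+ 3) = A ^+ 3 - A ^+ 4 + A ^+ 6 by ring.
  lra.
have h2 : A ^+ 8 <= A ^+ 6 + A ^+ 9.
  have : 0 <= A ^+ 6 * (1 - A ^+ 2 + A ^+ 3).
    apply: mulr_ge0; first exact: exprn_ge0.
    have [hA|hA] := lerP A 1.
      have : 0 <= A ^+ 3 by exact: exprn_ge0.
      have : A ^+ 2 <= 1 by rewrite expr_le1.
      lra.
    have : A ^+ 2 <= A ^+ 3.
      apply: ler_eXn2l => //; exact: ltW.
    lra.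
  have -> : A ^+ 6 * (1 - A ^+ 2 + A ^+ 3) = A ^+ 6 - A ^+ 8 + A ^+ 9 by ring.
  lra.
have e1 : (1 + A ^+ 4) ^+ 3 = 1 + 3 * A ^+ 4 + 3 * A ^+ 8 + A ^+ 12 by ring.
have e2 : 2 * (1 + A ^+ 3) ^+ 4 = 2 + 8 * A ^+ 3 + 12 * A ^+ 6 + 8 * A ^+ 9 + 2 * A ^+ 12 by ring.
rewrite e1 e2.
have : 0 <= A ^+ 3 by exact: exprn_ge0.
have : 0 <= A ^+ 6 by exact: exprn_ge0.
have : 0 <= A ^+ 9 by exact: exprn_ge0.
have : 0 <= A ^+ 12 by exact: exprn_ge0.
lra.
Qed.

Lemma pow4 (a b : R) : 0 <= a -> a `^ b = (a `^ (b / 4)) ^+ 4.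
Proof.
move=> a0; rewrite -powR_mulrn ?powR_ge0 // -powRrM.
by congr (_ `^ _); field.
Qed.

Lemma pow3 (a b : R) : 0 <= a -> a `^ (3 * b / 4) = (a `^ (b / 4)) ^+ 3.
Proof.
move=> a0; rewrite -powR_mulrn ?powR_ge0 // -powRrM.
by congr (_ `^ _); field.
Qed.

Lemma pow_mono (r r' e : R) : 0 <= e -> 0 <= r -> r <= r' -> r `^ e <= r' `^ e.
Proof.
move=> e0 r0 rr; apply: ge0_ler_powR => //; rewrite nnegrE //.
exact: le_trans rr.
Qed.

Lemma pow2a (a b : R) : 0 <= a -> b <= 1 -> (2 * a) `^ b <= 2 * a `^ b.
Proof.
move=> a0 b1; have h0 : (0:R) <= 2 by lra.
rewrite powRM //.
have h2 : 2 `^ b <= 2 by apply: ler1_powR => //; lra.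
have := powR_ge0 a b; have := powR_ge0 2 b; nra.
Qed.

Lemma powhalf (a e : R) : 0 <= a -> e <= 1 -> a `^ e / 2 <= (a / 2) `^ e.
Proof.
move=> a0 e1; have h0 : (0:R) <= 2^-1 by rewrite invr_ge0; lra.
rewrite powRM //.
have h2 : 2^-1 <= (2^-1 : R) `^ e.
  apply: ger1_powR => //; apply/andP; split; first by rewrite invr_gt0.
  by rewrite invf_le1 // ler1n.
have := powR_ge0 a e; nra.
Qed.

End Pow.

Section Aux.
Variables (R : realType) (d : nat).

Lemma tau_id (U : 'rV[R]_d -> R) (gamma : R) (x z : 'rV[R]_d) : 0 < gamma ->
  let s := Num.sqrt (2 * gamma) in
  let g0 := grad U x in
  let dl := - (gamma *: g0) + s *: z in
  let g1 := grad U (x + dl) in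
  tau U gamma x z = - (U x - U (x + dl) + dot g1 dl) + (s / 2) * dot (g1 - g0) z
     + (gamma / 4) * enorm (g1 - g0) ^+ 2.
Proof.
move=> g0p s g0 dl g1.
have sp : 0 < s by rewrite /s sqrtr_gt0 mulr_gt0.
have s2 : s ^+ 2 = 2 * gamma by rewrite /s sqr_sqrtr // mulr_ge0 // ltW.
have cE : Num.sqrt (gamma / 2) = s / 2.
  have -> : gamma / 2 = (s / 2) ^+ 2 by rewrite expr_div_n s2; field.
  by rewrite sqrtr_sqr ger0_norm // divr_ge0 // ltW.
rewrite /tau /=.
have yE : x - gamma *: grad U x + Num.sqrt (2 * gamma) *: z = x + dl.
  by rewrite /dl /g0 /s addrA.
rewrite yE -/g1 cE -/g0 !enorm_sq.
rewrite /dl.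
rewrite !(dotBl, dotBr, dotDl, dotDr, dotZl, dotZr, dotNl, dotNr).
rewrite (dotC z g0) (dotC z g1) (dotC g1 g0).
have gs : gamma = s ^+ 2 / 2 by rewrite s2; field.
rewrite [in RHS]gs [in LHS]gs.
set UA := U (x + _). set UB := U x.
by field.
Qed.

Lemma quad_scale (U : 'rV[R]_d -> R) (q v : 'rV[R]_d) (lo hi : R) :
  0 <= lo -> 0 <= hi ->
  (forall y, enorm y = 1 -> lo <= dot y (Hv U q y) <= hi) ->
  lo * enorm v ^+ 2 <= dot v (Hv U q v) <= hi * enorm v ^+ 2.
Proof.
move=> lo0 hi0 H.
have [n0|np] := eqVneq (enorm v) 0.
  have := CSabs v (Hv U q v); rewrite n0 mul0r normr_le0 => /eqP ->.
  by rewrite expr0n /= !mulr0 lexx.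
have nv := enorm_ge0 v.
have npos : 0 < enorm v by rewrite lt_neqAle eq_sym np nv.
set y := (enorm v)^-1 *: v.
have hy : enorm y = 1 by rewrite /y enormZ ger0_norm ?invr_ge0 // mulVf.
have vE : v = enorm v *: y by rewrite /y scalerA mulfV // scale1r.
have E : dot v (Hv U q v) = enorm v ^+ 2 * dot y (Hv U q y).
  by rewrite {1 2}vE HvZ dotZl dotZr mulrA expr2.
rewrite E; have /andP[h1 h2] := H y hy.
have n2 : 0 <= enorm v ^+ 2 by exact: exprn_ge0.
apply/andP; split; nra.
Qed.

Lemma C_bound (L mb Lb gbar : R) : 0 <= L -> 0 < mb -> 0 < Lb -> 0 <= gbar ->
  forall eps C, eps = (mb ^+ 3 / 2 ^+ 4) *
     (2 `^ (3 / 2) * Lb ^+ 2 + 2 `^ (- (1 / 2)) * Num.sqrt gbar * Lb ^+ 3)^-1 ->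
  C = 2 * L + 2 `^ (3 / 2) * Lb ^+ 2 / eps + (gbar / 2) * L ^+ 2
              + 2 `^ (- (1 / 2)) * gbar `^ (3 / 2) * Lb ^+ 3 / eps ->
  128 * Lb ^+ 4 / mb ^+ 3 <= C.
Proof.
move=> L0 mb0 Lb0 g0 eps C epsE CE.
set K := (2:R) `^ (3 / 2).
set J := (2:R) `^ (- (1 / 2)).
set G := Num.sqrt gbar.
have K0 : 0 < K by rewrite /K powR_gt0.
have J0 : 0 <= J by exact: powR_ge0.
have G0 : 0 <= G by exact: sqrtr_ge0.
have KK : K * K = 8.
  rewrite /K -powRD; last by apply/implyP => _; rewrite pnatr_eq0.
  have -> : (3 / 2 + 3 / 2 : R) = 3%:R by field.
  by rewrite powR_mulrn //; lra.
set D := K * Lb ^+ 2 + J * G * Lb ^+ 3.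
have D0 : K * Lb ^+ 2 <= D.
  rewrite /D lerDl; apply: mulr_ge0; [exact: mulr_ge0|exact: exprn_ge0 (ltW Lb0)].
have Dp : 0 < D.
  apply: lt_le_trans D0; apply: mulr_gt0 => //; exact: exprn_gt0.
have mb3 : 0 < mb ^+ 3 by exact: exprn_gt0.
have epsp : 0 < eps by rewrite epsE mulr_gt0 // ?divr_gt0 // ?invr_gt0 // exprn_gt0.
have t2 : K * Lb ^+ 2 / eps = 16 * K * Lb ^+ 2 * D / mb ^+ 3.
  rewrite epsE -/K -/J -/G -/D; field.
  by apply/andP; split; rewrite gt_eqF.
have T2 : 128 * Lb ^+ 4 / mb ^+ 3 <= K * Lb ^+ 2 / eps.
  rewrite t2 ler_pM2r ?invr_gt0 //.
  have : 16 * K * Lb ^+ 2 * (K * Lb ^+ 2) <= 16 * K * Lb ^+ 2 * D.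
    apply: ler_wpM2l => //; apply: mulr_ge0; [lra|exact: ltW (exprn_gt0 2 Lb0)].
  apply: le_trans; rewrite le_eqVlt; apply/orP; left; apply/eqP.
  have -> : 16 * K * Lb ^+ 2 * (K * Lb ^+ 2) = 16 * (K * K) * Lb ^+ 4 by ring.
  by rewrite KK; ring.
have t1 : 0 <= 2 * L by lra.
have t3 : 0 <= gbar / 2 * L ^+ 2 by apply: mulr_ge0; [lra| exact: exprn_ge0].
have t4 : 0 <= J * gbar `^ (3 / 2) * Lb ^+ 3 / eps.
  apply: divr_ge0; last exact: ltW.
  apply: mulr_ge0; [apply: mulr_ge0 => //; exact: powR_ge0|exact: exprn_ge0 (ltW Lb0)].
rewrite CE -/K -/J.
lra.
Qed.

End Aux.

Section Fin.
Variable R : realType.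

Lemma div_mono (c X Y : R) : 0 <= c -> 0 < X -> X <= Y -> c / Y <= c / X.
Proof.
move=> c0 X0 XY; have Y0 : 0 < Y by exact: lt_le_trans XY.
rewrite ler_pdivrMr // mulrAC ler_pdivlMr //; nra.
Qed.

Lemma cross (a b X Y : R) : 0 < X -> 0 < Y -> a / X <= b / Y -> a * Y <= b * X.
Proof.
move=> X0 Y0; rewrite ler_pdivrMr // mulrAC ler_pdivlMr //.
Qed.

Lemma final_arith (B dwz W Z u m Lam s gamma C : R) :
  0 < m -> 0 <= Lam -> 0 <= W -> 0 <= Z -> 0 <= u -> 0 < s -> s ^+ 2 = 2 * gamma ->
  0 < gamma ->
  m * u ^+ 2 / 2 <= B -> dwz <= W * Z -> W <= Lam * u -> gamma * Lam ^+ 2 <= m ->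
  Lam ^+ 2 <= 2 * m * C ->
  - B + s / 2 * dwz + gamma / 4 * W ^+ 2 <= C * gamma * Z ^+ 2.
Proof.
move=> m0 L0 W0 Z0 u0 s0 s2 g0 hB hd hW hg hC.
have h1 : s / 2 * dwz <= s / 2 * (Lam * u * Z).
  apply: ler_wpM2l; first lra.
  apply: le_trans hd _; apply: ler_wpM2r => //.
have h2 : gamma / 4 * W ^+ 2 <= m / 4 * u ^+ 2.
  have : W ^+ 2 <= (Lam * u) ^+ 2.
    have : 0 <= Lam * u by exact: mulr_ge0.
    nra.
  rewrite exprMn => hw.
  have : gamma * W ^+ 2 <= gamma * (Lam ^+ 2 * u ^+ 2) by apply: ler_wpM2l => //; exact: ltW.
  have : gamma * Lam ^+ 2 * u ^+ 2 <= m * u ^+ 2 by apply: ler_wpM2r => //; exact: exprn_ge0.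
  rewrite -mulrA; lra.
have h3 : - (m ^+ 2 * u ^+ 2) + 2 * m * s * Lam * u * Z <= s ^+ 2 * Lam ^+ 2 * Z ^+ 2.
  have : 0 <= (m * u - s * Lam * Z) ^+ 2 by exact: sqr_ge0.
  have -> : (m * u - s * Lam * Z) ^+ 2 = m ^+ 2 * u ^+ 2 - 2 * m * s * Lam * u * Z + s ^+ 2 * Lam ^+ 2 * Z ^+ 2 by ring.
  lra.
have h4 : s ^+ 2 * Lam ^+ 2 * Z ^+ 2 <= 4 * m * C * gamma * Z ^+ 2.
  rewrite s2.
  have Z2 : 0 <= Z ^+ 2 by exact: exprn_ge0.
  have : 2 * gamma * Z ^+ 2 * Lam ^+ 2 <= 2 * gamma * Z ^+ 2 * (2 * m * C).
    apply: ler_wpM2l => //; apply: mulr_ge0 => //; lra.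
  set k := Lam ^+ 2; set k2 := Z ^+ 2.
  move=> h; apply: le_trans (le_trans h _) => //; first by rewrite le_eqVlt; apply/orP; left; apply/eqP; ring.
  by rewrite le_eqVlt; apply/orP; left; apply/eqP; ring.
have h5 : - (m / 4 * u ^+ 2) + s / 2 * (Lam * u * Z) <= C * gamma * Z ^+ 2.
  have : 4 * m * (- (m / 4 * u ^+ 2) + s / 2 * (Lam * u * Z)) <= 4 * m * (C * gamma * Z ^+ 2).
    have -> : 4 * m * (- (m / 4 * u ^+ 2) + s / 2 * (Lam * u * Z)) = - (m ^+ 2 * u ^+ 2) + 2 * m * s * Lam * u * Z.
      by field.
    have -> : 4 * m * (C * gamma * Z ^+ 2) = 4 * m * C * gamma * Z ^+ 2 by ring.
    exact: le_trans h3 h4.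
  by rewrite ler_pM2l // mulr_gt0.
have : - B <= - (m * u ^+ 2 / 2) by rewrite lerN2.
have e : m * u ^+ 2 / 2 = 2 * (m / 4 * u ^+ 2) by field.
lra.
Qed.


Lemma consts (mb Lb X Y gamma C : R) : 0 < mb -> 0 < Lb -> 0 < X -> 0 < Y ->
  0 < gamma -> mb * Y <= Lb * X -> X ^+ 3 <= 2 * Y ^+ 4 ->
  gamma * (16 * Lb ^+ 4) <= mb ^+ 3 -> 128 * Lb ^+ 4 / mb ^+ 3 <= C ->
  gamma * (2 * Lb / Y) ^+ 2 <= mb / (2 * X) /\
  (2 * Lb / Y) ^+ 2 <= 2 * (mb / (2 * X)) * C.
Proof.
move=> mb0 Lb0 X0 Y0 g0 hc hpoly gm hC.
have KK : mb ^+ 2 * X <= 2 * Lb ^+ 2 * Y ^+ 2.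
  have k1 : (mb * Y) ^+ 2 <= (Lb * X) ^+ 2.
    have : 0 <= mb * Y by apply: mulr_ge0; exact: ltW.
    nra.
  have k2 : (mb * Y) ^+ 2 * X <= (Lb * X) ^+ 2 * X by apply: ler_wpM2r => //; exact: ltW.
  have k3 : Lb ^+ 2 * X ^+ 3 <= Lb ^+ 2 * (2 * Y ^+ 4) by apply: ler_wpM2l => //; exact: sqr_ge0.
  have Y2 : 0 < Y ^+ 2 by exact: exprn_gt0.
  rewrite -(ler_pM2l Y2).
  have -> : Y ^+ 2 * (mb ^+ 2 * X) = (mb * Y) ^+ 2 * X by ring.
  have -> : Y ^+ 2 * (2 * Lb ^+ 2 * Y ^+ 2) = Lb ^+ 2 * (2 * Y ^+ 4) by ring.
  apply: le_trans k2 _; apply: le_trans _ k3.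
  by rewrite le_eqVlt; apply/orP; left; apply/eqP; ring.
have Lb2 : 0 < Lb ^+ 2 by exact: exprn_gt0.
have Y2 : 0 < Y ^+ 2 by exact: exprn_gt0.
have mb2 : 0 < mb ^+ 2 by exact: exprn_gt0.
have mb3 : 0 < mb ^+ 3 by exact: exprn_gt0.
split.
  have k4 : 8 * gamma * Lb ^+ 2 * X <= mb * Y ^+ 2.
    have h1 : gamma * (16 * Lb ^+ 4) * X <= mb ^+ 3 * X by apply: ler_wpM2r => //; exact: ltW.
    have h2 : mb * (mb ^+ 2 * X) <= mb * (2 * Lb ^+ 2 * Y ^+ 2) by apply: ler_wpM2l => //; exact: ltW.
    have h3 : (2 * Lb ^+ 2) * (8 * gamma * Lb ^+ 2 * X) <= (2 * Lb ^+ 2) * (mb * Y ^+ 2).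
      have e1 : 2 * Lb ^+ 2 * (8 * gamma * Lb ^+ 2 * X) = gamma * (16 * Lb ^+ 4) * X by ring.
      have e2 : mb ^+ 3 * X = mb * (mb ^+ 2 * X) by ring.
      have e3 : mb * (2 * Lb ^+ 2 * Y ^+ 2) = 2 * Lb ^+ 2 * (mb * Y ^+ 2) by ring.
      rewrite e1 -e3; apply: le_trans h1 _; rewrite e2; exact: h2.
    by move: h3; rewrite ler_pM2l // mulr_gt0.
  have -> : gamma * (2 * Lb / Y) ^+ 2 = (8 * gamma * Lb ^+ 2 * X) / (2 * X * Y ^+ 2).
    by field; apply/andP; split; rewrite gt_eqF.
  have -> : mb / (2 * X) = (mb * Y ^+ 2) / (2 * X * Y ^+ 2).
    by field; apply/andP; split; rewrite gt_eqF.
  by rewrite ler_pM2r // invr_gt0 !mulr_gt0.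
have h1 : 2 * (mb / (2 * X)) * (128 * Lb ^+ 4 / mb ^+ 3) <= 2 * (mb / (2 * X)) * C.
  apply: ler_wpM2l => //; apply: mulr_ge0; first by [].
  by apply: divr_ge0; [exact: ltW|apply: mulr_ge0; [by []|exact: ltW]].
apply: le_trans h1.
have -> : 2 * (mb / (2 * X)) * (128 * Lb ^+ 4 / mb ^+ 3) = (128 * Lb ^+ 4 * Y ^+ 2) / (mb ^+ 2 * X * Y ^+ 2).
  by field; apply/and3P; split; rewrite gt_eqF.
have -> : (2 * Lb / Y) ^+ 2 = (4 * Lb ^+ 2 * mb ^+ 2 * X) / (mb ^+ 2 * X * Y ^+ 2).
  by field; apply/and3P; split; rewrite gt_eqF.
rewrite ler_pM2r; last by rewrite invr_gt0 !mulr_gt0.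
have : 4 * Lb ^+ 2 * (mb ^+ 2 * X) <= 4 * Lb ^+ 2 * (2 * Lb ^+ 2 * Y ^+ 2).
  by apply: ler_wpM2l => //; apply: mulr_ge0; [by []|exact: ltW].
have e : 4 * Lb ^+ 2 * mb ^+ 2 * X = 4 * Lb ^+ 2 * (mb ^+ 2 * X) by ring.
rewrite e; move/le_trans; apply.
have : 0 <= Lb ^+ 4 * Y ^+ 2 by apply: mulr_ge0; [exact: exprn_ge0 (ltW Lb0)|exact: ltW].
have -> : 4 * Lb ^+ 2 * (2 * Lb ^+ 2 * Y ^+ 2) = 8 * (Lb ^+ 4 * Y ^+ 2) by ring.
have -> : 128 * Lb ^+ 4 * Y ^+ 2 = 128 * (Lb ^+ 4 * Y ^+ 2) by ring.
lra.
Qed.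

End Fin.

Unset Implicit Arguments.
Close Scope classical_set_scope.

Theorem lemma6 (R : realType) (d : nat) (U : 'rV[R]_d -> R)
  (beta L mb Lb Kb gbar : R) :
  0 <= beta -> beta < 1 ->
  C2 U ->
  grad U 0 = 0 ->
  (forall x y : 'rV[R]_d, enorm (y *m (hess U x)^T) <= L * enorm y) ->
  0 < mb -> 0 <= Lb -> 0 <= Kb ->
  (forall x y : 'rV[R]_d, Kb <= enorm x -> enorm y = 1 ->
     Lb / (1 + enorm x `^ (3 * beta / 4)) >= hessf U x y y /\
     hessf U x y y >= mb / (1 + enorm x `^ beta)) ->
  gbar <= Num.min (4 * L)^-1 (mb ^+ 3 / (2 ^+ 4 * Lb ^+ 4)) ->
  let eps := (mb ^+ 3 / 2 ^+ 4) *
     (2 `^ (3 / 2) * Lb ^+ 2 + 2 `^ (- (1 / 2)) * Num.sqrt gbar * Lb ^+ 3)^-1 in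
  let C2gb := 2 * L + 2 `^ (3 / 2) * Lb ^+ 2 / eps + (gbar / 2) * L ^+ 2
              + 2 `^ (- (1 / 2)) * gbar `^ (3 / 2) * Lb ^+ 3 / eps in
  let Kt := Num.max (4 * Kb * (1 + L / mb)) ((4 * Kb * (1 + L / mb)) `^ (1 - beta)^-1) in
  let Kbar := Num.max (2 * L * Kb / Lb) ((2 * L * Kb / Lb) `^ (1 - 3 * beta / 4)^-1) in
  forall (gamma : R) (x z : 'rV[R]_d),
    0 < gamma -> gamma <= gbar ->
    Num.max (2 * Kb) (Num.max Kt Kbar) <= enorm x ->
    enorm z <= enorm x / (4 * Num.sqrt (2 * gamma)) ->
    tau U gamma x z <= C2gb * gamma * enorm z ^+ 2.
Proof.
move=> b0 b1 hC2 g00 hL mb0 Lb0 Kb0 hK hg eps C2gb Kt Kbar gamma x z ga0 gag hx hz.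
have [dU [dG _]] := hC2.
have gbp : 0 < gbar := lt_le_trans ga0 gag.
move: hg; rewrite le_min => /andP[hg1 hg2].
have L0 : 0 < L.
  rewrite ltNge; apply/negP => hL0.
  have : (4 * L)^-1 <= 0 by rewrite invr_le0; lra.
  lra.
have Lbp : 0 < Lb.
  rewrite lt_neqAle Lb0 andbT eq_sym; apply/negP => /eqP Lbz.
  move: hg2; rewrite Lbz expr0n /= mulr0 invr0 mulr0; lra.
have hC : 128 * Lb ^+ 4 / mb ^+ 3 <= C2gb :=
  @C_bound R L mb Lb gbar (ltW L0) mb0 Lbp (ltW gbp) eps C2gb erefl erefl.
have Cpos : 0 <= C2gb.
  apply: le_trans hC; apply: divr_ge0; last exact: exprn_ge0 (ltW mb0).
  apply: mulr_ge0; [lra|exact: exprn_ge0 Lb0].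
have gL : gamma * L <= 4^-1.
  have h := le_trans gag hg1.
  have h4 : 0 < 4 * L by lra.
  move: h; rewrite -div1r ler_pdivlMr // => h.
  lra.
have gm : gamma * (16 * Lb ^+ 4) <= mb ^+ 3.
  have h := le_trans gag hg2.
  have h4 : 0 < 2 ^+ 4 * Lb ^+ 4 by apply: mulr_gt0; [lra|exact: exprn_gt0].
  move: h; rewrite ler_pdivlMr // => h.
  have e16 : (2:R) ^+ 4 = 16 by rewrite !exprS expr0; lra.
  by rewrite -e16.
set a := enorm x.
have a0 : 0 <= a := enorm_ge0 x.
move: hx; rewrite ge_max => /andP[hKa _].
set s := Num.sqrt (2 * gamma).
have sp : 0 < s by rewrite /s sqrtr_gt0 mulr_gt0.
have s2 : s ^+ 2 = 2 * gamma by rewrite /s sqr_sqrtr // mulr_ge0 // ltW.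
have Z0 : 0 <= enorm z := enorm_ge0 z.
have sz : s * enorm z <= a / 4.
  move: hz; rewrite ler_pdivlMr ?mulr_gt0 // => hz.
  have hz2 : enorm z * (4 * s) <= a := hz.
  nra.
set g0 := grad U x.
have ng0 : enorm g0 <= L * a.
  have [c _ E] := grad_mvt 0 x g0 dG.
  move: E; rewrite add0r g00 dot0l subr0 add0r -Hv_mx => E.
  have h1 := CS (x *m (hess U (c *: x))^T) g0.
  have h2 := hL (c *: x) x.
  have n0 := enorm_ge0 g0.
  have h3 : enorm g0 ^+ 2 <= L * a * enorm g0.
    rewrite enorm_sq E; apply: le_trans h1 _; apply: ler_wpM2r => //.
  have La : 0 <= L * a by apply: mulr_ge0 => //; exact: ltW.
  nra.
set dl := - (gamma *: g0) + s *: z.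
set u := enorm dl.
have u0 : 0 <= u := enorm_ge0 dl.
have hu : u <= a / 2.
  have h1 := enormD (- (gamma *: g0)) (s *: z).
  rewrite enormN !enormZ (ger0_norm (ltW ga0)) (ger0_norm (ltW sp)) in h1.
  have h2 : gamma * enorm g0 <= gamma * (L * a) by apply: ler_wpM2l => //; exact: ltW.
  have h3 : gamma * (L * a) <= a / 4.
    rewrite mulrA; have : gamma * L * a <= 4^-1 * a by apply: ler_wpM2r.
    lra.
  rewrite /u; lra.
have hKa2 : 2 * Kb <= a := hKa.
have Kba : Kb <= a / 2 by lra.
have seg_lo : forall t, 0 <= t <= 1 -> a / 2 <= enorm (x + t *: dl).
  move=> t /andP[t0 t1].
  have h := enorm_rev x (t *: dl); rewrite enormZ ger0_norm // in h.
  have : t * u <= u by rewrite -{2}(mul1r u); apply: ler_wpM2r.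
  rewrite -/a -/u in h; lra.
have seg_hi : forall t, 0 <= t <= 1 -> enorm (x + t *: dl) <= 2 * a.
  move=> t /andP[t0 t1].
  have h := enormD x (t *: dl); rewrite enormZ ger0_norm // in h.
  have : t * u <= u by rewrite -{2}(mul1r u); apply: ler_wpM2r.
  rewrite -/a -/u in h; lra.
set P := a `^ beta.
set Q := a `^ (3 * beta / 4).
have P0 : 0 <= P := powR_ge0 _ _.
have Q0 : 0 <= Q := powR_ge0 _ _.
set m := mb / (2 * (1 + P)).
set Lam := 2 * Lb / (1 + Q).
have m0 : 0 < m by rewrite /m divr_gt0 //; lra.
have Lam0 : 0 <= Lam by rewrite /Lam divr_ge0 //; lra.
have e0 : 0 <= 3 * beta / 4 by lra.
have e1 : 3 * beta / 4 <= 1 by lra.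
have Hpt : forall t, 0 <= t <= 1 -> forall v,
    m * enorm v ^+ 2 <= dot v (Hv U (x + t *: dl) v) <= Lam * enorm v ^+ 2.
  move=> t ht v; apply: quad_scale; [exact: ltW|exact: Lam0|].
  move=> y hy.
  have hlo := seg_lo t ht; have hhi := seg_hi t ht.
  set pn := enorm (x + t *: dl) in hlo hhi *.
  have [hup hlow] := hK (x + t *: dl) y (le_trans Kba hlo) hy.
  rewrite hessfE -/pn in hup hlow.
  apply/andP; split.
    apply: le_trans hlow.
    have h1 : pn `^ beta <= (2 * a) `^ beta by apply: pow_mono => //; exact: enorm_ge0.
    have h2 : (2 * a) `^ beta <= 2 * P by apply: pow2a => //; exact: ltW.
    have h3 := powR_ge0 pn beta.
    rewrite /m; apply: div_mono; [exact: ltW| lra | lra].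
  apply: le_trans hup _.
  have h1 : (a / 2) `^ (3 * beta / 4) <= pn `^ (3 * beta / 4).
    by apply: pow_mono => //; apply: divr_ge0 => //; lra.
  have h2 : Q / 2 <= (a / 2) `^ (3 * beta / 4) by apply: powhalf.
  have -> : Lam = Lb / ((1 + Q) / 2) by rewrite /Lam; field; lra.
  apply: div_mono => //; lra.
have HvB : forall t, 0 <= t <= 1 -> forall v, enorm (Hv U (x + t *: dl) v) <= Lam * enorm v.
  move=> t ht; apply: (Hv_bound hC2 Lam0).
    move=> v; have /andP[h _] := Hpt t ht v; apply: le_trans h.
    by apply: mulr_ge0; [exact: ltW|exact: exprn_ge0 (enorm_ge0 v)].
  by move=> v; have /andP[_ h] := Hpt t ht v.
have hc0 : forall t, 0 <= t <= 1 -> m * u ^+ 2 <= hessf U (x + t *: dl) dl dl.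
  by move=> t ht; rewrite hessfE; have /andP[h _] := Hpt t ht dl.
have hB := @bregman R d U x dl (m * u ^+ 2) dU dG hc0.
set g1 := grad U (x + dl).
set w := g1 - g0.
have W0 : 0 <= enorm w := enorm_ge0 w.
have hw : enorm w <= Lam * u.
  have [c hc E] := @grad_mvt R d U x dl w dG.
  move: E; rewrite -/g1 -/g0 -dotBl -/w => E.
  have h1 := CS (Hv U (x + c *: dl) dl) w.
  have h2 := HvB c hc dl.
  have h3 : enorm w ^+ 2 <= Lam * u * enorm w.
    rewrite enorm_sq E; apply: le_trans h1 _; apply: ler_wpM2r => //.
  have : 0 <= Lam * u by exact: mulr_ge0.
  nra.
have T : tau U gamma x z = - (U x - U (x + dl) + dot g1 dl) + (s / 2) * dot w z
     + (gamma / 4) * enorm w ^+ 2 := @tau_id R d U gamma x z ga0.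
rewrite T.
have dwz := CS w z.
have [uz|upos] := eqVneq u 0.
  have W00 : enorm w = 0 by apply/eqP; rewrite eq_le W0 andbT; move: hw; rewrite uz mulr0.
  rewrite W00 mul0r in dwz; rewrite W00 uz expr0n /= mulr0 mul0r in hB *.
  have : 0 <= C2gb * gamma * enorm z ^+ 2.
    by apply: mulr_ge0; [apply: mulr_ge0 => //; exact: ltW|exact: exprn_ge0].
  have : s / 2 * dot w z <= 0.
    have : 0 <= s / 2 by lra.
    nra.
  lra.
have up : 0 < u by rewrite lt_neqAle eq_sym upos u0.
set e := u^-1 *: dl.
have he : enorm e = 1 by rewrite /e enormZ ger0_norm ?invr_ge0 // ?mulVf //; exact: ltW.
have Kbx : Kb <= a by lra.
have [hup hlow] := hK x e Kbx he.
rewrite -/P -/Q in hup hlow.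
set X := 1 + P. set Y := 1 + Q.
have X0 : 0 < X by rewrite /X; lra.
have Y0 : 0 < Y by rewrite /Y; lra.
have hc : mb * Y <= Lb * X := cross X0 Y0 (le_trans hlow hup).
set A := a `^ (beta / 4).
have A0 : 0 <= A := powR_ge0 _ _.
have hP : P = A ^+ 4 := pow4 beta a0.
have hQ : Q = A ^+ 3 := pow3 beta a0.
have hpoly : X ^+ 3 <= 2 * Y ^+ 4 by rewrite /X /Y hP hQ; exact: poly_ineq.
have [F4 F5] := consts mb0 Lbp X0 Y0 ga0 hc hpoly gm hC.
exact: (final_arith m0 Lam0 W0 Z0 u0 sp s2 ga0 hB dwz hw F4 F5).
Qed.
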